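(* Let $\mathbf A$ be a finite simple algebra of type 2 (affine type) whose traces have cardinality a power of the prime $p$. Then there is an integer $k$ depending only on $\mathbf A$ such that for every program $(t,\iota,S)$ over $\mathbf A$ of length $l$, there is a $\mathrm{BOUND}_k\circ\mathrm{MOD}_p$ circuit of size $O(l)$ computing the same Boolean function as $(t,\iota,S)$.
   Context: A finite algebra has finite universe and finitely many basic operations; it is simple if its only congruences are the trivial ones; its type is the tame congruence theory type of its unique prime quotient $0\prec 1$. An $n$-ary circuit over $\mathbf A$ is a DAG with one output node, sources labelled by variables $x_1,\dots,x_n$ or constants, gates labelled by basic operations; its size (length) is nodes plus edges. A program $(t,\iota,S)$ over $\mathbf A$ consists of an $n$-ary circuit $t$, $\iota:\{0,1\}\to A$ and $S\subseteq A$; it computes $b\mapsto 1$ iff $t(\iota(b_1),\dots,\iota(b_n))\in S$; its length is the size of $t$. A $\mathrm{MOD}_p$ gate with accepting set $T\subseteq\mathbb Z_p$ has unbounded fan-in and outputs 1 iff the sum of its Boolean inputs modulo $p$ is in $T$. A $\mathrm{BOUND}_k$ gate has at most $k$ inputs and computes an arbitrary Boolean function of them. A $\mathrm{BOUND}_k\circ\mathrm{MOD}_p$ circuit is a single $\mathrm{BOUND}_k$ gate whose inputs are $\mathrm{MOD}_p$ gates reading the input bits; its size is the number of edges plus gates. *)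

(* Defs.v *)
From mathcomp Require Import all_boot all_order all_algebra.
Set Implicit Arguments. Unset Strict Implicit. Unset Printing Implicit Defensive.
Import GRing.Theory.
Local Open Scope ring_scope.

Section Algebra.
Context (A : finType) (I : finType) (ar : I -> nat)
        (op : forall i : I, ('I_(ar i) -> A) -> A).

Definition congruence (theta : rel A) : Prop :=
  equivalence_rel theta /\
  forall i (x y : 'I_(ar i) -> A),
    (forall j, theta (x j) (y j)) -> theta (@op i x) (@op i y).

Definition cong0 : rel A := fun a b => a == b.
Definition cong1 : rel A := fun _ _ => true.

Definition simple_alg : Prop :=
  (1 < #|A|)%N /\
  forall theta, congruence theta ->
    (forall a b, theta a b = cong0 a b) \/ (forall a b, theta a b = cong1 a b).

(* Nodes are listed in topological order; a gate node refers to earlier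
   nodes by their position in the list. *)
Inductive node (n : nat) :=
| NVar of 'I_n
| NConst of A
| NGate (i : I) of ('I_(ar i) -> nat).

Record circuit (n : nat) := Circuit { c_nodes : seq (node n); c_out : node n }.

Definition node_wf n (k : nat) (v : node n) : bool :=
  match v with
  | NGate i args => [forall j, args j < k]%N
  | _ => true
  end.

Fixpoint nodes_wf n (k : nat) (s : seq (node n)) : bool :=
  match s with
  | [::] => true
  | v :: s' => node_wf k v && nodes_wf k.+1 s'
  end.

Definition circuit_wf n (c : circuit n) : bool :=
  nodes_wf 0 (c_nodes c) && node_wf (size (c_nodes c)) (c_out c).

(* [a0] is a dummy default, irrelevant for well-formed circuits *)
Definition node_val n (a0 : A) (x : 'I_n -> A) (vals : seq A) (v : node n) : A :=
  match v with
  | NVar j => x j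
  | NConst a => a
  | NGate i args => @op i (fun j => nth a0 vals (args j))
  end.

Fixpoint eval_nodes n a0 (x : 'I_n -> A) (vals : seq A) (s : seq (node n)) :=
  match s with
  | [::] => vals
  | v :: s' => eval_nodes a0 x (rcons vals (node_val a0 x vals v)) s'
  end.

Definition circ_eval n (a0 : A) (c : circuit n) (x : 'I_n -> A) : A :=
  node_val a0 x (eval_nodes a0 x [::] (c_nodes c)) (c_out c).

Definition node_edges n (v : node n) : nat :=
  match v with NGate i _ => ar i | _ => 0%N end.

(* size (length) = number of nodes + number of edges *)
Definition circ_size n (c : circuit n) : nat :=
  ((size (c_nodes c)).+1 + \sum_(v <- c_out c :: c_nodes c) node_edges v)%N.

Definition prog_eval n (t : circuit n) (iota : bool -> A) (S : {set A})
  (b : 'I_n -> bool) : bool :=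
  circ_eval (iota false) t (fun j => iota (b j)) \in S.

Definition is_poly n (f : ('I_n -> A) -> A) : Prop :=
  exists (c : circuit n) (a0 : A), circuit_wf c /\ forall x, f x = circ_eval a0 c x.

Definition is_upoly (f : A -> A) : Prop := is_poly (fun x : 'I_1 -> A => f (x ord0)).

Definition minimal_set (alpha beta : rel A) (U : {set A}) : Prop :=
  (exists f, is_upoly f /\ U = f @: [set: A] /\
             exists a b, beta a b && ~~ alpha (f a) (f b)) /\
  forall g, is_upoly g -> (exists a b, beta a b && ~~ alpha (g a) (g b)) ->
            ~~ (g @: [set: A] \proper U).

Definition trace (alpha beta : rel A) (N : {set A}) : Prop :=
  exists U, minimal_set alpha beta U /\
  exists b, N = U :&: [set x | beta b x] /\
  exists x y, [&& x \in N, y \in N & ~~ alpha x y].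

(* The induced algebra A|_N (whose operations are the restrictions to N of
   the polynomial operations of A preserving N) is polynomially equivalent
   to a one-dimensional vector space over a finite field F, identified with
   N via the bijection e. *)
Definition induced_affine (N : {set A}) : Prop :=
  exists (F : finFieldType) (e : F -> A),
    injective e /\ e @: [set: F] = N /\
    forall n (h : ('I_n -> F) -> F),
      (exists g, is_poly g /\ forall y, g (fun i => e (y i)) = e (h y)) <->
      (exists (c : 'I_n -> F) (d : F), forall y, h y = d + \sum_i c i * y i).

(* type of the prime quotient 0 < 1 of a simple algebra is 2 *)
Definition simple_type2 : Prop :=
  forall N, trace cong0 cong1 N -> induced_affine N.

End Algebra.

Record bm_circuit (n p : nat) := BMCircuit {
  bm_m : nat;
  bm_wires : 'I_bm_m -> seq 'I_n;
  bm_acc : 'I_bm_m -> {set 'I_p};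
  bm_out : ('I_bm_m -> bool) -> bool          (* the BOUND gate's function *)
}.

Definition mod_gate_val n p (w : seq 'I_n) (T : {set 'I_p}) (b : 'I_n -> bool) : bool :=
  [exists t in T, val t == (\sum_(j <- w) nat_of_bool (b j)) %% p]%N.

Definition bm_eval n p (c : bm_circuit n p) (b : 'I_n -> bool) : bool :=
  @bm_out _ _ c (fun j => mod_gate_val (@bm_wires _ _ c j) (@bm_acc _ _ c j) b).

(* size = edges (input->MOD and MOD->BOUND) + gates (MOD gates and BOUND gate) *)
Definition bm_size n p (c : bm_circuit n p) : nat :=
  (\sum_(j < bm_m c) size (@bm_wires _ _ c j) + bm_m c + (bm_m c).+1)%N.

(* Main.v *)
Require Import Defs.
From mathcomp Require Import all_boot all_order all_algebra.
From mathcomp Require Import all_boot all_order all_algebra all_field.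
From Stdlib Require Import Classical ClassicalEpsilon FunctionalExtensionality.
From mathcomp Require Import ring zify.
Set Implicit Arguments. Unset Strict Implicit. Unset Printing Implicit Defensive.
Import GRing.Theory.

Section Circ.
Context (A : finType) (I : finType) (ar : I -> nat)
        (op : forall i : I, ('I_(ar i) -> A) -> A).

Inductive ispoly n : (('I_n -> A) -> A) -> Prop :=
| PVar (j : 'I_n) : ispoly (fun x => x j)
| PConst (a : A) : ispoly (fun _ => a)
| POp (i : I) (f : 'I_(ar i) -> ('I_n -> A) -> A) :
    (forall j, ispoly (f j)) -> ispoly (fun x => op (fun j => f j x)).

Lemma ispoly_ext n (f g : ('I_n -> A) -> A) : ispoly f -> (forall x, f x = g x) -> ispoly g.
Proof. by move=> H E; have -> : g = f by apply: functional_extensionality => x; rewrite E. Qed.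

Lemma ispoly_subst n m (f : ('I_n -> A) -> A) (g : 'I_n -> ('I_m -> A) -> A) :
  ispoly f -> (forall j, ispoly (g j)) -> ispoly (fun y => f (fun j => g j y)).
Proof.
move=> Hf Hg; elim: Hf => [j|a|i h _ IH] //; first exact: PConst.
have := @POp m i (fun j y => h j (fun k => g k y)) IH; exact.
Qed.

Notation node := (@node A I ar).
Notation circuit := (@circuit A I ar).

Lemma eval_nodes_cat n a0 (x : 'I_n -> A) vals s1 s2 :
  eval_nodes op a0 x vals (s1 ++ s2) = eval_nodes op a0 x (eval_nodes op a0 x vals s1) s2.
Proof. by elim: s1 vals => //= v s1 IH vals; rewrite IH. Qed.

Lemma eval_nodes_rcons n a0 (x : 'I_n -> A) vals s v :
  eval_nodes op a0 x vals (rcons s v) =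
  rcons (eval_nodes op a0 x vals s) (node_val op a0 x (eval_nodes op a0 x vals s) v).
Proof. by rewrite -cats1 eval_nodes_cat. Qed.

Lemma size_eval_nodes n a0 (x : 'I_n -> A) vals s :
  size (eval_nodes op a0 x vals s) = (size vals + size s)%N.
Proof. by elim: s vals => [|v s IH] vals /=; rewrite ?addn0 // IH size_rcons addSnnS. Qed.

Lemma eval_nodes_prefix n a0 (x : 'I_n -> A) vals s :
  exists w, eval_nodes op a0 x vals s = vals ++ w.
Proof.
elim: s vals => [|v s IH] vals /=; first by exists [::]; rewrite cats0.
have [w ->] := IH (rcons vals (node_val op a0 x vals v)).
by exists (node_val op a0 x vals v :: w); rewrite -cats1 -catA.
Qed.

Lemma nodes_wf_cat n k (s1 s2 : seq (node n)) :
  nodes_wf k (s1 ++ s2) = nodes_wf k s1 && nodes_wf (k + size s1) s2.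
Proof.
elim: s1 k => [|v s1 IH] k /=; first by rewrite addn0.
by rewrite IH addSnnS andbA.
Qed.

Lemma nodes_wf_rcons n k (s : seq (node n)) v :
  nodes_wf k (rcons s v) = nodes_wf k s && node_wf (k + size s) v.
Proof. by rewrite -cats1 nodes_wf_cat /= andbT. Qed.

Lemma node_val_ext n a0 a1 (x : 'I_n -> A) vals w v :
  node_wf (size vals) v -> node_val op a0 x vals v = node_val op a1 x (vals ++ w) v.
Proof.
case: v => //= i args /forallP H; congr (op _); apply: functional_extensionality => j.
by rewrite nth_cat H; apply: set_nth_default.
Qed.

Lemma eval_nodes_a0 n a0 a1 (x : 'I_n -> A) vals s :
  nodes_wf (size vals) s -> eval_nodes op a0 x vals s = eval_nodes op a1 x vals s.
Proof.
elim: s vals => //= v s IH vals /andP[Hv Hs].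
rewrite (node_val_ext a0 a1 x [::] Hv) cats0 IH //.
by rewrite size_rcons.
Qed.

Lemma circ_eval_a0 n a0 a1 (c : circuit n) x :
  circuit_wf c -> circ_eval op a0 c x = circ_eval op a1 c x.
Proof.
case/andP=> H1 H2; rewrite /circ_eval (eval_nodes_a0 a0 a1 x (vals:=[::])) //.
by rewrite (node_val_ext a0 a1 x [::]) ?cats0 // size_eval_nodes.
Qed.

Definition allpoly n a0 (L : seq (('I_n -> A) -> A)) :=
  forall k, (k < size L)%N -> ispoly (nth (fun _ => a0) L k).

Lemma node_val_poly n a0 (L : seq (('I_n -> A) -> A)) v :
  allpoly a0 L -> node_wf (size L) v ->
  ispoly (fun x => node_val op a0 x (map (fun f => f x) L) v).
Proof.
move=> HL; case: v => [j|a|i args] /=; [by move=> _; apply: PVar|by move=> _; apply: PConst|].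
move/forallP=> H.
move: (@POp n i (fun j => nth (fun _ => a0) L (args j)) (fun j => HL _ (H j))) => Hp.
apply: (ispoly_ext Hp) => x /=; congr (op _); apply: functional_extensionality => j.
by rewrite (nth_map (fun _ => a0)).
Qed.

Lemma eval_nodes_poly n a0 (L : seq (('I_n -> A) -> A)) s :
  allpoly a0 L -> nodes_wf (size L) s ->
  exists L', allpoly a0 L' /\ size L' = (size L + size s)%N /\
    forall x, eval_nodes op a0 x (map (fun f => f x) L) s = map (fun f => f x) L'.
Proof.
elim: s L => [|v s IH] L HL /=.
  by move=> _; exists L; rewrite addn0.
case/andP=> Hv Hs.
set g := (fun x => node_val op a0 x (map (fun f => f x) L) v).
have Hg : ispoly g by exact: node_val_poly.
have HL' : allpoly a0 (rcons L g).
  move=> k; rewrite size_rcons ltnS leq_eqVlt => /orP[/eqP->|hk].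
    by rewrite nth_rcons ltnn eqxx.
  by rewrite nth_rcons hk; apply: HL.
have [L' [H1 [H2 H3]]] := IH _ HL' (ltac:(by rewrite size_rcons)).
exists L'; split=> //; split; first by rewrite H2 size_rcons addSnnS.
by move=> x; rewrite -H3 map_rcons.
Qed.

Lemma circ_poly n a0 (c : circuit n) :
  circuit_wf c -> ispoly (fun x => circ_eval op a0 c x).
Proof.
case/andP=> H1 H2.
have [L' [HL [HS HE]]] := @eval_nodes_poly n a0 [::] _ (fun k hk => match (notF hk) with end) H1.
rewrite /circ_eval; have := node_val_poly HL (v := c_out c).
rewrite HS /= => /(_ H2) Hp; apply: (ispoly_ext Hp) => x.
by rewrite -HE.
Qed.

Definition shiftn n (off : nat) (v : node n) : node n :=
  match v with
  | NGate i args => @NGate A I ar n i (fun j => off + args j)%N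
  | v => v
  end.

Lemma node_wf_shift n off k (v : node n) : node_wf (off + k) (shiftn off v) = node_wf k v.
Proof.
case: v => //= i args; apply/forallP/forallP => H j; have := H j; by rewrite ltn_add2l.
Qed.

Lemma nodes_wf_shift n off k (s : seq (node n)) :
  nodes_wf (off + k) (map (shiftn off) s) = nodes_wf k s.
Proof. by elim: s k => //= v s IH k; rewrite node_wf_shift -addnS IH. Qed.

Lemma node_val_shift n a0 (x : 'I_n -> A) pre vals v :
  node_val op a0 x (pre ++ vals) (shiftn (size pre) v) = node_val op a0 x vals v.
Proof.
case: v => //= i args; congr (op _); apply: functional_extensionality => j.
by rewrite nth_cat ltnNge leq_addr /= addKn.
Qed.

Lemma eval_nodes_shift n a0 (x : 'I_n -> A) pre vals s :
  eval_nodes op a0 x (pre ++ vals) (map (shiftn (size pre)) s) =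
  pre ++ eval_nodes op a0 x vals s.
Proof.
elim: s vals => //= v s IH vals.
by rewrite node_val_shift rcons_cat IH.
Qed.

Fixpoint blocks n (off : nat) (cs : seq (circuit n)) : seq (node n) :=
  match cs with
  | [::] => [::]
  | c :: cs' => map (shiftn off) (rcons (c_nodes c) (c_out c)) ++
                blocks (off + (size (c_nodes c)).+1) cs'
  end.

Fixpoint bpos n (off : nat) (cs : seq (circuit n)) (j : nat) : nat :=
  match cs with
  | [::] => 0
  | c :: cs' => if j is j'.+1 then bpos (off + (size (c_nodes c)).+1) cs' j'
                else (off + size (c_nodes c))%N
  end.

Lemma size_blocks n off (cs : seq (circuit n)) :
  size (blocks off cs) = \sum_(c <- cs) (size (c_nodes c)).+1.
Proof.
elim: cs off => [|c cs IH] off /=; first by rewrite big_nil.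
by rewrite big_cons size_cat size_map size_rcons IH.
Qed.

Lemma blocks_wf n off (cs : seq (circuit n)) :
  all (@circuit_wf _ _ _ n) cs -> nodes_wf off (blocks off cs).
Proof.
elim: cs off => //= c cs IH off /andP[/andP[H1 H2] Hr].
rewrite nodes_wf_cat size_map size_rcons IH // andbT.
by rewrite -[X in nodes_wf X _]addn0 nodes_wf_shift nodes_wf_rcons H1.
Qed.

Lemma bpos_lt n off (cs : seq (circuit n)) j :
  (j < size cs)%N -> (bpos off cs j < off + size (blocks off cs))%N.
Proof.
elim: cs off j => //= c cs IH off [|j] /=.
  by move=> _; rewrite size_cat size_map size_rcons addnA -addSn ltn_addr // ltn_add2l ltnSn.
rewrite ltnS => /(IH (off + (size (c_nodes c)).+1)%N); rewrite size_cat size_map size_rcons addnA //.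
Qed.

Lemma eval_blocks n a0 (x : 'I_n -> A) (cs : seq (circuit n)) pre :
  all (@circuit_wf _ _ _ n) cs ->
  exists w, eval_nodes op a0 x pre (blocks (size pre) cs) = pre ++ w /\
    forall j c0, (j < size cs)%N ->
      nth a0 (pre ++ w) (bpos (size pre) cs j) = circ_eval op a0 (nth c0 cs j) x.
Proof.
elim: cs pre => [|c cs IH] pre /=.
  by move=> _; exists [::]; rewrite cats0.
case/andP=> /andP[H1 H2] Hr.
have E := eval_nodes_shift a0 x pre [::] (rcons (c_nodes c) (c_out c)).
rewrite cats0 in E; rewrite eval_nodes_cat E.
set B := eval_nodes op a0 x [::] (rcons (c_nodes c) (c_out c)).
have SB : size B = (size (c_nodes c)).+1 by rewrite size_eval_nodes size_rcons.
have [w [Hw Hj]] := IH (pre ++ B) Hr.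
rewrite size_cat SB in Hw Hj.
exists (B ++ w); rewrite catA; split=> // -[|j] c0 /=.
  move=> _; rewrite -catA nth_cat ltnNge leq_addr /= addKn nth_cat SB ltnSn.
  rewrite /B eval_nodes_rcons nth_rcons size_eval_nodes /= ltnn eqxx.
  by rewrite /circ_eval.
by rewrite ltnS => hj; rewrite (Hj _ c0).
Qed.


Lemma compile n (f : ('I_n -> A) -> A) :
  ispoly f -> exists c : circuit n, circuit_wf c /\ forall a0 x, f x = circ_eval op a0 c x.
Proof.
elim=> [j|a|i h _ IH].
- by exists (Circuit [::] (NVar A ar j)).
- by exists (Circuit [::] (@NConst A I ar n a)).
have cj : forall j, {c : circuit n | circuit_wf c /\ forall a0 x, h j x = circ_eval op a0 c x}.
  by move=> j; apply: constructive_indefinite_description; apply: IH.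
set cs := map (fun j => sval (cj j)) (enum 'I_(ar i)).
have Hall : all (@circuit_wf _ _ _ n) cs.
  by rewrite all_map; apply/allP => j _ /=; case: (svalP (cj j)).
have Hsz : size cs = ar i by rewrite size_map size_enum_ord.
have Hnth : forall (j : 'I_(ar i)) c0, nth c0 cs j = sval (cj j).
  move=> j c0; rewrite /cs (nth_map j); first by rewrite nth_ord_enum.
  by rewrite size_enum_ord.
exists (Circuit (blocks 0 cs) (@NGate A I ar n i (fun j => bpos 0 cs j))); split.
  rewrite /circuit_wf /= blocks_wf //=; apply/forallP => j.
  by have := @bpos_lt n 0 cs j; rewrite Hsz ltn_ord add0n => ->.
move=> a0 x; rewrite /circ_eval /=.
have [w [Hw Hj]] := @eval_blocks n a0 x cs [::] Hall.
rewrite Hw /=; congr (op _); apply: functional_extensionality => j.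
rewrite (Hj j (sval (cj j))) ?Hsz // Hnth.
by case: (svalP (cj j)) => _ /(_ a0 x) ->.
Qed.

Lemma ispoly_is_poly n (f : ('I_n -> A) -> A) : ispoly f -> is_poly op f.
Abort.
Lemma ispoly_is_poly n (a0 : A) (f : ('I_n -> A) -> A) : ispoly f -> is_poly op f.
Proof. by case/compile => c [H1 H2]; exists c, a0; split. Qed.

Definition upoly (g : A -> A) := ispoly (fun x : 'I_1 -> A => g (x ord0)).

Lemma upoly_id : upoly id.
Proof. exact: PVar. Qed.

Lemma upoly_comp g h : upoly g -> upoly h -> upoly (fun a => g (h a)).
Proof.
move=> Hg Hh; have := ispoly_subst Hg (g := fun _ x => h (x ord0)) (fun _ => Hh).
by [].
Qed.

Lemma cong_rel (th : A -> A -> Prop) :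
  (forall a, th a a) -> (forall a b, th a b -> th b a) ->
  (forall a b c, th a b -> th b c -> th a c) ->
  (forall g, upoly g -> forall a b, th a b -> th (g a) (g b)) ->
  congruence op (fun a b => if excluded_middle_informative (th a b) then true else false).
Proof.
move=> Hr Hs Ht Hu.
have E a b : (if excluded_middle_informative (th a b) then true else false) <-> th a b.
  by case: excluded_middle_informative.
split.
  move=> x y z; split; first by apply/E.
  move=> /E Hxy; apply/idP/idP => /E H; apply/E; [exact: Ht (Hs _ _ Hxy) H | exact: Ht Hxy H].
move=> i x y Hj; apply/E.
have Hj' j : th (x j) (y j) by apply/E.
pose z (m : nat) := fun j : 'I_(ar i) => if (j < m)%N then y j else x j.
suff : forall m, (m <= ar i)%N -> th (op x) (op (z m)).
  move/(_ (ar i) (leqnn _)); congr (th _ (op _)); apply: functional_extensionality => j.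
  by rewrite /z ltn_ord.
elim=> [|m IH] hm.
  have -> : z 0%N = x by apply: functional_extensionality.
  exact: Hr.
have hm' : (m < ar i)%N by [].
pose jm := Ordinal hm'.
pose g := fun s => op (fun j => if j == jm then s else z m j).
have Hg : upoly g.
  have := @POp 1 i (fun j => if j == jm then (fun x : 'I_1 -> A => x ord0) else (fun _ => z m j)).
  move=> H; apply: (ispoly_ext (H _)) => [j|w]; first by case: (j == jm); [apply: PVar | apply: PConst].
  rewrite /g; congr (op _); apply: functional_extensionality => j; by case: (j == jm).
apply: Ht (IH (ltnW hm)) _.
have := Hu g Hg _ _ (Hj' jm).
have -> : g (x jm) = op (z m).
  rewrite /g; congr (op _); apply: functional_extensionality => j.
  by case: eqP => // ->; rewrite /z /= ltnn.
have -> // : g (y jm) = op (z m.+1).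
rewrite /g; congr (op _); apply: functional_extensionality => j.
rewrite /z; case: (eqVneq j jm) => [->|hne]; first by rewrite /= ltnSn.
rewrite [in RHS]ltnS [in RHS]leq_eqVlt.
have -> // : (j == m :> nat) = false.
by apply/eqP => h; move/eqP: hne; apply; apply: val_inj.
Qed.


Lemma simple_dich (Hsim : simple_alg op) (th : A -> A -> Prop) :
  (forall a, th a a) -> (forall a b, th a b -> th b a) ->
  (forall a b c, th a b -> th b c -> th a c) ->
  (forall g, upoly g -> forall a b, th a b -> th (g a) (g b)) ->
  (forall a b, th a b -> a = b) \/ (forall a b, th a b).
Proof.
move=> Hr Hs Ht Hu; have C := cong_rel Hr Hs Ht Hu.
case: Hsim => _ /(_ _ C) [] H; [left|right] => a b; have := H a b;
  case: excluded_middle_informative => // h.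
  by rewrite /cong0 => /esym/eqP.
Qed.

Definition node_var n (v : node n) : seq 'I_n := if v is NVar j then [:: j] else [::].
Definition nvars n (s : seq (node n)) : seq 'I_n := flatten (map (@node_var n) s).
Definition cvars n (c : circuit n) : seq 'I_n := undup (nvars (c_out c :: c_nodes c)).

Lemma size_nvars n (s : seq (node n)) : (size (nvars s) <= size s)%N.
Proof. by elim: s => //= v s IH; rewrite size_cat; case: v => //= *; rewrite ?ltnS // ltnW ?ltnS. Qed.

Lemma size_cvars n (c : circuit n) : (size (cvars c) <= circ_size c)%N.
Proof.
apply: leq_trans (size_undup _) _; apply: leq_trans (size_nvars _) _.
by rewrite /circ_size /= leq_addr.
Qed.

Lemma node_val_indep n a0 (x x' : 'I_n -> A) vals v :
  (forall j, j \in node_var v -> x j = x' j) -> node_val op a0 x vals v = node_val op a0 x' vals v.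
Proof. by case: v => //= j /(_ j); rewrite inE eqxx => ->. Qed.

Lemma eval_nodes_indep n a0 (x x' : 'I_n -> A) vals s :
  (forall j, j \in nvars s -> x j = x' j) -> eval_nodes op a0 x vals s = eval_nodes op a0 x' vals s.
Proof.
elim: s vals => //= v s IH vals H.
rewrite (@node_val_indep _ a0 x x'); last by move=> j hj; apply: H; rewrite /nvars /= mem_cat hj.
by apply: IH => j hj; apply: H; rewrite /nvars /= mem_cat hj orbT.
Qed.

Lemma circ_indep n a0 (c : circuit n) (x x' : 'I_n -> A) :
  (forall j, j \in cvars c -> x j = x' j) -> circ_eval op a0 c x = circ_eval op a0 c x'.
Proof.
move=> H; rewrite /circ_eval (@eval_nodes_indep _ a0 x x').
  by apply: node_val_indep => j hj; apply: H; rewrite mem_undup /nvars /= mem_cat hj.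
by move=> j hj; apply: H; rewrite mem_undup /nvars /= mem_cat hj orbT.
Qed.

Section Affine.
Local Open Scope ring_scope.
Variables (Hsim : simple_alg op) (N : {set A}) (F : finFieldType) (e : F -> A).
Hypotheses (einj : injective e) (eN : e @: [set: F] = N).
Hypothesis Haff : forall n (h : ('I_n -> F) -> F),
      (exists g, is_poly op g /\ forall y, g (fun i => e (y i)) = e (h y)) <->
      (exists (c : 'I_n -> F) (d : F), forall y, h y = d + \sum_i c i * y i).

Definition ie (a : A) : F := odflt 0 [pick z | e z == a].

Lemma ieK a : a \in N -> e (ie a) = a.
Proof.
rewrite -eN => /imsetP[z _ ->]; rewrite /ie; case: pickP => [z' /eqP //|/(_ z)].
by rewrite eqxx.
Qed.

Lemma eK z : ie (e z) = z.
Proof. by apply: einj; rewrite ieK // -eN imset_f ?inE. Qed.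

Definition P2 (G : A -> A -> A) :=
  ispoly (fun x : 'I_2 -> A => G (x ord0) (x ord_max)) /\ forall u v, G u v \in N.

Definition D (G : A -> A -> A) u u' v v' : F :=
  ie (G u' v') - ie (G u v') - ie (G u' v) + ie (G u v).

Definition pair2 (s s' : F) : 'I_2 -> F := fun i => if val i == 0%N then s else s'.

Lemma step1 G g h p0 q0 p1 q1 : P2 G -> upoly g -> upoly h ->
  D G (g (e p0)) (g (e q0)) (h (e p1)) (h (e q1)) = 0.
Proof.
move=> [HG HN] Hg Hh.
pose H (y : 'I_2 -> F) := ie (G (g (e (y ord0))) (h (e (y ord_max)))).
have : exists gg, is_poly op gg /\ forall y, gg (fun i => e (y i)) = e (H y).
  exists (fun x : 'I_2 -> A => G (g (x ord0)) (h (x ord_max))); split.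
    apply: (ispoly_is_poly (e 0)).
    have := ispoly_subst HG (g := fun j (x : 'I_2 -> A) =>
      if val j == 0%N then g (x ord0) else h (x ord_max)).
    move=> K; apply: (ispoly_ext (K _)) => [j|x] /=.
      case: (val j == 0%N).
        exact: (ispoly_subst Hg (g := fun _ (x : 'I_2 -> A) => x ord0) (fun _ => PVar _)).
      exact: (ispoly_subst Hh (g := fun _ (x : 'I_2 -> A) => x ord_max) (fun _ => PVar _)).
    by [].
  by move=> y; rewrite /H ieK.
case/Haff => c [d Hd].
have E s s' : ie (G (g (e s)) (h (e s'))) = d + c ord0 * s + c ord_max * s'.
  have := Hd (pair2 s s'); rewrite /H /pair2 /= => ->.
  rewrite !big_ord_recl big_ord0 addr0 addrA /=.
  by have -> : lift ord0 ord0 = ord_max :> 'I_2 by apply: val_inj.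
rewrite /D !E; ring.
Qed.

Lemma P2_comp G g h : P2 G -> upoly g -> upoly h -> P2 (fun x y => G (g x) (h y)).
Proof.
move=> [HG HN] Hg Hh; split => //.
have := ispoly_subst HG (g := fun j (x : 'I_2 -> A) =>
  if val j == 0%N then g (x ord0) else h (x ord_max)).
move=> K; apply: (ispoly_ext (K _)) => [j|x] /=; last by [].
case: (val j == 0%N).
  exact: (ispoly_subst Hg (g := fun _ (x : 'I_2 -> A) => x ord0) (fun _ => PVar _)).
exact: (ispoly_subst Hh (g := fun _ (x : 'I_2 -> A) => x ord_max) (fun _ => PVar _)).
Qed.

Lemma e01 : e 0 <> e 1.
Proof. by move/einj/eqP; rewrite eq_sym oner_eq0. Qed.

Lemma step2 G g p0 q0 v v' : P2 G -> upoly g ->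
  D G (g (e p0)) (g (e q0)) v v' = 0.
Proof.
move=> HG Hg.
pose th v v' := forall G g p0 q0, P2 G -> upoly g -> D G (g (e p0)) (g (e q0)) v v' = 0.
have : (forall a b, th a b -> a = b) \/ (forall a b, th a b).
  apply: simple_dich => //.
  - by move=> a G' g' p q _ _; rewrite /D; ring.
  - move=> a b H G' g' p q H1 H2; have := H G' g' p q H1 H2.
    by rewrite /D => E; apply/eqP; rewrite -oppr_eq0 -E; apply/eqP; ring.
  - move=> a b c H H' G' g' p q H1 H2; have := H G' g' p q H1 H2; have := H' G' g' p q H1 H2.
    by rewrite /D => E1 E2; rewrite -[RHS](addr0 0) -{1}E1 -E2; ring.
  - move=> rho Hr a b H G' g' p q H1 H2.
    exact: (H (fun x y => G' x (rho y)) g' p q (P2_comp H1 upoly_id Hr) H2).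
case=> [H|H]; last exact: H.
have : th (e 0) (e 1).
  move=> G' g' p q H1 H2.
  exact: (step1 (h := id) p q 0 1 H1 H2 upoly_id).
by move/H/e01.
Qed.

Lemma step3 G u u' v v' : P2 G -> D G u u' v v' = 0.
Proof.
move=> HG.
pose th u u' := forall G v v', P2 G -> D G u u' v v' = 0.
have : (forall a b, th a b -> a = b) \/ (forall a b, th a b).
  apply: simple_dich => //.
  - by move=> a G' p q _; rewrite /D; ring.
  - move=> a b H G' p q H1; have := H G' p q H1.
    by rewrite /D => E; apply/eqP; rewrite -oppr_eq0 -E; apply/eqP; ring.
  - move=> a b c H H' G' p q H1; have := H G' p q H1; have := H' G' p q H1.
    by rewrite /D => E1 E2; rewrite -[RHS](addr0 0) -{1}E1 -E2; ring.
  - move=> rho Hr a b H G' p q H1.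
    exact: (H (fun x y => G' (rho x) y) p q (P2_comp H1 Hr upoly_id)).
case=> [H|H]; last exact: H.
have : th (e 0) (e 1).
  move=> G' p q H1.
  exact: (step2 (g := id) 0 1 p q H1 upoly_id).
by move/H/e01.
Qed.

Definition upd n (w : 'I_n -> A) (i : 'I_n) (s : A) : 'I_n -> A :=
  fun j => if j == i then s else w j.

Lemma slice_P2 n (G : ('I_n -> A) -> A) w i k :
  ispoly G -> (forall x, G x \in N) -> P2 (fun s s' => G (upd (upd w i s) k s')).
Proof.
move=> HG HN; split => //.
have := ispoly_subst HG (g := fun j (x : 'I_2 -> A) =>
  if j == k then x ord_max else if j == i then x ord0 else w j).
move=> K; apply: (ispoly_ext (K _)) => [j|x] /=.
  by case: (j == k); [apply: PVar|case: (j == i); [apply: PVar|apply: PConst]].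
by congr G; apply: functional_extensionality => j; rewrite /upd.
Qed.

Section Sep.
Variables (n : nat) (G : ('I_n -> A) -> A) (a c : A).
Hypotheses (HG : ispoly G) (HN : forall x, G x \in N).

Definition dif i (w : 'I_n -> A) := ie (G (upd w i c)) - ie (G (upd w i a)).

Lemma upd_upd (w : 'I_n -> A) i s s' : upd (upd w i s) i s' = upd w i s'.
Proof. by apply: functional_extensionality => j; rewrite /upd; case: (j == i). Qed.

Lemma dif_upd i k (w : 'I_n -> A) v : i != k -> dif i w = dif i (upd w k v).
Proof.
move=> hik; have := step3 a c (w k) v (slice_P2 w i k HG HN).
have E1 s : upd (upd w i s) k (w k) = upd w i s.
  by apply: functional_extensionality => j; rewrite /upd; case: eqVneq => // ->; rewrite eq_sym (negbTE hik).
have E2 s : upd (upd w i s) k v = upd (upd w k v) i s.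
  apply: functional_extensionality => j; rewrite /upd.
  by case: eqVneq => [->|//]; rewrite eq_sym (negbTE hik).
rewrite /D !E1 !E2 /dif => H.
move: H; set X := ie (G (upd w i c)); set Y := ie (G (upd w i a)).
set Z := ie _; set W := ie _ => H.
have -> : X - Y = (Z - W) - (Z - W - X + Y) by ring.
by rewrite H subr0.
Qed.

Lemma dif_const i (w w' : 'I_n -> A) : dif i w = dif i w'.
Proof.
suff H : forall m, dif i w = dif i (fun j => if (j < m)%N then w' j else w j).
  by rewrite (H n); congr (dif i); apply: functional_extensionality => j; rewrite ltn_ord.
elim=> [|m IH].
  by congr (dif i); apply: functional_extensionality.
case: (ltnP m n) => hm; last first.
  rewrite IH; congr (dif i); apply: functional_extensionality => j.
  by rewrite ltnS !(leq_trans (ltn_ord j) hm) (ltnW (leq_trans (ltn_ord j) hm)).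
set cur := (fun j : 'I_n => if (j < m)%N then w' j else w j).
have Enext : (fun j : 'I_n => if (j < m.+1)%N then w' j else w j) = upd cur (Ordinal hm) (w' (Ordinal hm)).
  apply: functional_extensionality => j; rewrite /upd /cur.
  case: eqVneq => [->|hne] /=; first by rewrite ifT //; apply: ltnSn.
  rewrite ltnS leq_eqVlt.
  have -> // : (j == m :> nat) = false.
  by apply/eqP => h; move/eqP: hne; apply; apply: val_inj.
rewrite Enext IH; case: (eqVneq i (Ordinal hm)) => [<-|hne].
  by rewrite /dif !upd_upd.
exact: dif_upd.
Qed.

Variable (iota : bool -> A).
Hypotheses (Ha : iota false = a) (Hc : iota true = c).

Lemma separable (b : 'I_n -> bool) :
  ie (G (fun j => iota (b j))) =
  ie (G (fun _ => a)) + \sum_(i < n) dif i (fun _ => a) *+ b i.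
Proof.
suff H : forall m, ie (G (fun j => iota ((j < m)%N && b j))) =
  ie (G (fun _ => a)) + \sum_(i < n) dif i (fun _ => a) *+ ((i < m)%N && b i).
  have := H n; under eq_bigr do rewrite ltn_ord /=.
  by move=> <-; congr (ie (G _)); apply: functional_extensionality => j; rewrite ltn_ord.
elim=> [|m IH].
  rewrite big1 ?addr0 //; congr (ie (G _)).
  by apply: functional_extensionality => j; rewrite Ha.
case: (ltnP m n) => hm; last first.
  have E j : ((j : 'I_n) < m.+1)%N = (j < m)%N.
    by rewrite ltnS !(leq_trans (ltn_ord j) hm) (ltnW (leq_trans (ltn_ord j) hm)).
  under eq_bigr do rewrite E.
  by rewrite -IH; congr (ie (G _)); apply: functional_extensionality => j; rewrite E.
set km := Ordinal hm.
set cur := (fun j : 'I_n => iota ((j < m)%N && b j)).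
have Ecur : cur = upd cur km a.
  apply: functional_extensionality => j; rewrite /upd /cur; case: eqVneq => [->|//].
  by rewrite /= ltnn Ha.
have Enext : (fun j : 'I_n => iota ((j < m.+1)%N && b j)) = upd cur km (iota (b km)).
  apply: functional_extensionality => j; rewrite /upd /cur.
  case: eqVneq => [->|hne] /=; first by rewrite (_ : (m < m.+1)%N = true) //; apply: ltnSn.
  rewrite ltnS leq_eqVlt.
  have -> // : (j == m :> nat) = false.
  by apply/eqP => h; move/eqP: hne; apply; apply: val_inj.
have Hk : (km < m.+1)%N = true := ltnSn m.
have Hk' : (km < m)%N = false := ltnn m.
have Er : \sum_(i < n | i != km) dif i (fun _ => a) *+ ((i < m.+1)%N && b i) =
          \sum_(i < n | i != km) dif i (fun _ => a) *+ ((i < m)%N && b i).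
  apply: eq_bigr => j hj; rewrite ltnS leq_eqVlt.
  have -> // : (j == m :> nat) = false.
  by apply/eqP => h; move/eqP: hj; apply; apply: val_inj.
rewrite Enext (bigD1 km) //= Er Hk.
have IH' := IH; rewrite (bigD1 km) //= Hk' /= mulr0n add0r in IH'.
case Hb: (b km) => /=.
  rewrite Hc mulr1n.
  have -> : ie (G (upd cur km c)) = ie (G cur) + dif km cur.
    rewrite /dif -Ecur. ring.
  by rewrite IH' (dif_const km cur (fun _ => a)); ring.
by rewrite Ha -Ecur IH' mulr0n add0r.
Qed.
End Sep.

Section Assembly.
Variables (p : nat) (pp : prime p) (Hch : (p%:R : F) = 0).
Variable (u : A * A -> A -> A).
Hypotheses (Hu : forall zz, upoly (u zz)) (HuN : forall zz x, u zz x \in N)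
  (Hus : forall zz : A * A, zz.1 != zz.2 -> u zz zz.1 != u zz zz.2).

Definition TT := (A * A * F * 'I_p)%type.

Lemma mulrn_modp (d : F) k : d *+ k = d *+ (k %% p).
Proof.
by rewrite -[d *+ k]mulr_natr -[d *+ (k %% p)]mulr_natr {1}(divn_eq k p) natrD natrM Hch mulr0 add0r.
Qed.

Lemma assembly n (t : circuit n) (iota : bool -> A) (S : {set A}) : circuit_wf t ->
  exists cc : bm_circuit n p, (bm_m cc <= #|{: TT}|)%N /\
    (bm_size cc <= (3 * #|{: TT}| + 1) * circ_size t)%N /\
    forall b, bm_eval cc b = prog_eval op t iota S b.
Proof.
move=> Ht.
set a := iota false; set c := iota true.
pose Gz zz (x : 'I_n -> A) := u zz (circ_eval op a t x).
have HGz zz : ispoly (Gz zz).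
  exact: (ispoly_subst (Hu zz) (g := fun _ x => circ_eval op a t x) (fun _ => circ_poly a Ht)).
have HGN zz x : Gz zz x \in N by apply: HuN.
pose base zz := ie (Gz zz (fun _ => a)).
pose del zz i := dif (Gz zz) a c i (fun _ => a).
set vars := cvars t.
have Hdel0 zz i : i \notin vars -> del zz i = 0.
  move=> hi; rewrite /del /dif /Gz (@circ_indep n a t _ (upd (fun _ => a) i a)) ?subrr //.
  move=> j hj; rewrite /upd; case: eqVneq => // hji.
  by move: hi; rewrite -hji hj.
pose cnt zz d (b : 'I_n -> bool) := (\sum_(i <- vars | del zz i == d) b i)%N.
have Hval zz b : ie (Gz zz (fun j => iota (b j))) = base zz + \sum_(d : F) d *+ (cnt zz d b %% p).
  rewrite (separable (HGz zz) (HGN zz) (erefl a) (erefl c)).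
  congr (_ + _).
  rewrite (bigID (fun i => i \in vars)) /= [X in _ + X]big1 ?addr0; last first.
    by move=> i hi; move: (Hdel0 zz i hi); rewrite /del => ->; rewrite mul0rn.
  rewrite -big_uniq ?undup_uniq //=.
  rewrite (partition_big (fun i => del zz i) xpredT) //=.
  apply: eq_bigr => d _; rewrite -mulrn_modp /cnt -sumrMnr.
  by apply: eq_bigr => i /eqP <-.
pose W (x : TT) := [seq i <- vars | del x.1.1 i == x.1.2].
pose Acc (x : TT) := [set x.2].
pose rr (o : TT -> bool) zz d := if [pick r : 'I_p | o (zz, d, r)] is Some r then val r else 0%N.
pose out (o : TT -> bool) := [exists z in S, [forall zz : A * A,
   ie (u zz z) == base zz + \sum_(d : F) d *+ rr o zz d]].
exists (@BMCircuit n p #|{: TT}| (fun j => W (enum_val j)) (fun j => Acc (enum_val j))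
          (fun o => out (fun x => o (enum_rank x)))).
split=> //=; split.
  rewrite /bm_size /=.
  have H1 : (\sum_(j < #|{: TT}|) size (W (enum_val j)) <= #|{: TT}| * size vars)%N.
    apply: (@leq_trans (\sum_(j < #|{: TT}|) size vars)).
      by apply: leq_sum => j _; rewrite size_filter count_size.
    by rewrite big_const_ord iter_addn_0 mulnC.
  have H2 := size_cvars t.
  have H3 : (1 <= circ_size t)%N by rewrite /circ_size addSn.
  rewrite -/vars in H2.
  set K := #|{: TT}| in H1 *; set V := size vars in H1 H2; set CS := circ_size t in H2 H3 *.
  have h1 : (K * V <= K * CS)%N by rewrite leq_mul2l H2 orbT.
  have h2 : (K <= K * CS)%N by rewrite -{1}[K]muln1 leq_mul2l H3 orbT.
  apply: leq_trans (_ : K * V + K + K.+1 <= _)%N; first by rewrite !leq_add2r.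
  nia.
move=> b; rewrite /bm_eval /=.
have Hgate (x : TT) : mod_gate_val (W x) (Acc x) b = (val x.2 == cnt x.1.1 x.1.2 b %% p)%N.
  rewrite /mod_gate_val /Acc /W big_filter.
  apply/existsP/idP => [[r /andP[]]|h]; first by rewrite inE => /eqP ->.
  by exists x.2; rewrite inE eqxx.
have Hrr zz d : rr (fun x => mod_gate_val (W (enum_val (enum_rank x))) (Acc (enum_val (enum_rank x))) b) zz d
     = (cnt zz d b %% p)%N.
  rewrite /rr; case: pickP => [r H|H].
    by move: H; rewrite /= enum_rankK Hgate /= => /eqP.
  move: (H (Ordinal (ltn_pmod (cnt zz d b) (prime_gt0 pp)))).
  by rewrite /= enum_rankK Hgate /= eqxx.
rewrite /out /prog_eval.
set z0 := circ_eval op a t (fun j => iota (b j)).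
have Hz0 zz : ie (u zz z0) = base zz + \sum_(d : F) d *+ (cnt zz d b %% p) by rewrite -Hval.
apply/existsP/idP => [[z /andP[zS /forallP Hz]]|z0S].
  suff -> : z0 = z by [].
  apply/eqP; apply: contraT => hne.
  case/negP: (@Hus (z0, z) hne) => /=.
  have := Hz (z0, z); under eq_bigr do rewrite Hrr.
  rewrite -Hz0 => /eqP /(congr1 e); rewrite !ieK //.
  by move=> ->.
exists z0; rewrite z0S /=; apply/forallP => zz.
by under eq_bigr do rewrite Hrr; rewrite Hz0.
Qed.
End Assembly.
End Affine.

Lemma is_upoly_upoly g : is_upoly op g -> upoly g.
Proof.
case=> c [a0 [Hw H]]; have := circ_poly a0 Hw => K.
by apply: (ispoly_ext K) => x; rewrite H.
Qed.

Lemma trace_exists (a1 a2 : A) : a1 != a2 ->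
  exists f, is_upoly op f /\ (exists a b, f a != f b) /\
    trace op (@cong0 A) (@cong1 A) (f @: [set: A]).
Proof.
move=> h12.
pose P k := exists f, is_upoly op f /\ (exists a b, f a != f b) /\ #|f @: [set: A]| = k.
suff : forall k, P k -> exists f, is_upoly op f /\ (exists a b, f a != f b) /\
   forall g, is_upoly op g -> (exists a b, g a != g b) -> ~~ (g @: [set: A] \proper f @: [set: A]).
  case/(_ #|id @: [set: A]|).
    exists id; split; last by split; [exists a1, a2|].
    by exists (Circuit [::] (NVar A ar (@ord0 0))), a1.
  move=> f [Hf [Hab Hmin]]; exists f; split=> //; split=> //.
  exists (f @: [set: A]); split.
    split; first by exists f; split=> //; split=> //; case: Hab => a [b hab]; exists a, b.
    by move=> g Hg [a [b /andP[_ hab]]]; apply: Hmin => //; exists a, b.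
  exists a1; split; first by apply/setP => z; rewrite !inE andbT.
  case: Hab => a [b hab]; exists (f a), (f b); rewrite !imset_f ?inE //.
elim/ltn_ind=> k IH [f [Hf [Hab Hk]]].
case: (classic (exists g, is_upoly op g /\ (exists a b, g a != g b) /\
                   g @: [set: A] \proper f @: [set: A])) => [[g [Hg [Hgab Hpr]]]|Hno].
  apply: (IH #|g @: [set: A]|); first by rewrite -Hk; apply: proper_card.
  by exists g.
exists f; split=> //; split=> // g Hg Hgab; apply/negP => Hpr; apply: Hno.
by exists g.
Qed.

Lemma separation (Hsim : simple_alg op) f : upoly f -> (exists a b, f a != f b) ->
  forall z z', z != z' -> exists v, upoly v /\ f (v z) != f (v z').
Proof.
move=> Hf [a [b hab]] z z' hz.
pose th x y := forall v, upoly v -> f (v x) = f (v y).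
have [H|H] : (forall x y, th x y -> x = y) \/ (forall x y, th x y).
- apply: (simple_dich Hsim).
  + by move=> x v.
  + by move=> x y H v hv; rewrite H.
  + by move=> x y w H1 H2 v hv; rewrite H1 // H2.
  + by move=> g hg x y H v hv; apply: (H (fun a => v (g a))); apply: upoly_comp.
- apply: NNPP => Hn; move/eqP: hz; apply; apply: H => v hv.
  by apply: NNPP => hne; apply: Hn; exists v; split=> //; apply/eqP.
- by move/eqP: hab; case; apply: (H a b id upoly_id).
Qed.
End Circ.

Unset Implicit Arguments.
Set Strict Implicit.

Theorem mainTheorem6 (A I : finType) (ar : I -> nat)
  (op : forall i : I, ('I_(ar i) -> A) -> A) (p : nat) :
  prime p ->
  simple_alg op ->
  simple_type2 op ->
  (forall N : {set A}, trace op (cong0 (A:=A)) (cong1 (A:=A)) N ->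
     exists m : nat, #|N| = (p ^ m)%N) ->
  exists k C : nat,
    forall (n : nat) (t : @circuit A I ar n) (iota : bool -> A) (S : {set A}),
      circuit_wf t ->
      exists c : bm_circuit n p,
        (bm_m c <= k)%N /\ (bm_size c <= C * circ_size t)%N /\
        forall b : 'I_n -> bool, bm_eval c b = prog_eval op t iota S b.
Proof.
move=> pp Hsim Htype Hcard.
have [a1 [a2 [_ _ h12]]] : exists a1 a2, [/\ a1 \in A, a2 \in A & a1 != a2].
  by apply/card_gt1P; case: Hsim.
have [f [Hf [Hfab Htr]]] := trace_exists op h12.
set N := f @: [set: A] in Htr.
have [F [e [einj [eN Haff]]]] := Htype N Htr.
have [m Hm] := Hcard N Htr.
have HF : #|F| = (p ^ m)%N by rewrite -Hm -eN card_imset // cardsT.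
have Hch : (p%:R : F)%R = 0%R by apply: GRing.pcharf0; apply: card_finPcharP HF pp.
have Hfu := is_upoly_upoly Hf.
have Hu : forall zz : A * A, exists g : A -> A, upoly op g /\ (forall x, g x \in N) /\
    (zz.1 != zz.2 -> g zz.1 != g zz.2).
  move=> [z z'] /=; case: (eqVneq z z') => [_|hz].
    by exists f; do 2!split=> //; move=> x; rewrite imset_f ?inE.
  have [v [Hv Hne]] := separation Hsim Hfu Hfab hz.
  exists (fun x => f (v x)); split; first exact: upoly_comp.
  by split=> // x; rewrite imset_f ?inE.
pose u zz := proj1_sig (constructive_indefinite_description _ (Hu zz)).
have Hu1 zz : upoly op (u zz) := proj1 (proj2_sig (constructive_indefinite_description _ (Hu zz))).
have Hu2 zz x : u zz x \in N := proj1 (proj2 (proj2_sig (constructive_indefinite_description _ (Hu zz)))) x.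
have Hu3 zz : zz.1 != zz.2 -> u zz zz.1 != u zz zz.2 :=
  proj2 (proj2 (proj2_sig (constructive_indefinite_description _ (Hu zz)))).
exists #|{: TT A F p}|, (3 * #|{: TT A F p}| + 1)%N.
move=> n t iota S Ht.
exact: (assembly Hsim einj eN Haff pp Hch Hu1 Hu2 Hu3 iota S Ht).
Qed.
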